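(* Let $N$ be a positive integer, $R\in\{0,1,\dots,N\}$, $B=N-R$, $n\in\{1,\dots,N\}$, and let $X$ have the hypergeometric distribution $$\Pr\{X=x\}=\frac{\binom Rx\binom B{n-x}}{\binom Nn}\ \text{ for }x\in\{0,\dots,n\}\text{ with }x\le R,\ n-x\le B,\qquad \Pr\{X=x\}=0\text{ for other }x\in\{0,\dots,n\}.$$ Let $\mu=nR/N$. Let $r,b$ be nonnegative integers with $r\le R$, $b\le B$, $r+b=n$. Define $\widehat R=\min\{N,\lfloor(N+1)\frac rn\rfloor\}$ and $\widehat B=N-\widehat R$. Then $$\Pr\{X\le r\}\le\frac{\binom Rr\binom Bb}{\binom{\widehat R}r\binom{\widehat B}b}\ \text{ for }r\le\mu,\qquad \Pr\{X\ge r\}\le\frac{\binom Rr\binom Bb}{\binom{\widehat R}r\binom{\widehat B}b}\ \text{ for }r\ge\mu.$$ *)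

(* Defs.v *)
From mathcomp Require Import all_boot all_order all_algebra.
Set Implicit Arguments. Unset Strict Implicit. Unset Printing Implicit Defensive.
Import Order.TTheory GRing.Theory Num.Theory.
Local Open Scope ring_scope.

(* Hypergeometric pmf: Pr{X = x} = C(R,x) C(N-R,n-x) / C(N,n), for x in 0..n.
   Since 'C(m,k) = 0 when k > m, this is 0 when x > R or n - x > N - R. *)
Definition hyp_pmf (N R n x : nat) : rat :=
  ('C(R, x) * 'C(N - R, n - x))%:R / ('C(N, n))%:R.

Definition hyp_cdf_le (N R n r : nat) : rat :=
  \sum_(0 <= x < n.+1 | (x <= r)%N) hyp_pmf N R n x.
Definition hyp_cdf_ge (N R n r : nat) : rat :=
  \sum_(0 <= x < n.+1 | (r <= x)%N) hyp_pmf N R n x.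

Definition hyp_mean (N R n : nat) : rat := (n * R)%:R / N%:R.

Definition Rhat (N n r : nat) : nat := minn N (((N + 1) * r) %/ n).

Definition hyp_bound (N R n r b : nat) : rat :=
  ('C(R, r) * 'C(N - R, b))%:R /
  ('C(Rhat N n r, r) * 'C(N - Rhat N n r, b))%:R.

(* Main.v *)
Require Import Defs.
From mathcomp Require Import all_boot all_order all_algebra.
From mathcomp Require Import zify ring.
Import Order.TTheory GRing.Theory Num.Theory.
Lemma bin_tp2 a a' j i : (a <= a')%N -> (j <= i)%N ->
  ('C(a, i) * 'C(a', j) <= 'C(a, j) * 'C(a', i))%N.
Proof.
move=> haa; elim: i => [|i IH]; first by rewrite leqn0 => /eqP ->.
rewrite leq_eqVlt => /orP [/eqP -> //| ]; rewrite ltnS => /IH {}IH.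
rewrite -(leq_pmul2l (ltn0Sn i)) mulnA mul_bin_left.
rewrite mulnCA mul_bin_left -mulnA.
apply: (leq_trans (leq_mul (leqnn _) IH)).
rewrite [X in (_ <= X)%N]mulnCA.
apply: leq_mul; first exact: leq_sub2r.
by rewrite mulnC.
Qed.
Lemma t1 N n r : (0 < n)%N -> (n <= N)%N -> (r <= N)%N -> (r <= minn N (((N + 1) * r) %/ n))%N.
Proof. move=> *. rewrite leq_min; apply/andP; split => //. rewrite leq_divRL //. nia. Qed.
Lemma t2 N n r : (0 < n)%N -> (n <= N)%N -> (r <= n)%N -> (n - r <= N - minn N (((N + 1) * r) %/ n))%N.
Proof. move=> h0 h1 h2.
have [->|hrn] := eqVneq r n; first by rewrite subnn.
have : ((N + 1) * r %/ n <= N - n + r)%N.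
  rewrite -ltnS ltn_divLR //. have : (r < n)%N by lia. nia.
lia. Qed.
Lemma t3 N n r R : (0 < n)%N -> (n <= N)%N -> (r <= n)%N -> (R <= N)%N -> (r * N <= n * R)%N -> (minn N (((N + 1) * r) %/ n) <= R)%N.
Proof. move=> h0 h1 h2 h3 h4.
have [hr|hrn] := eqVneq r n.
  subst r; move: h4; rewrite leq_pmul2l //. lia.
have : ((N + 1) * r %/ n <= R)%N.
  rewrite -ltnS ltn_divLR //. have : (r < n)%N by lia. nia.
lia. Qed.
Lemma t4 N n r R : (0 < n)%N -> (R <= N)%N -> (n * R <= r * N)%N -> (R <= minn N (((N + 1) * r) %/ n))%N.
Proof. move=> *. rewrite leq_min; apply/andP; split => //. rewrite leq_divRL //. nia. Qed.
Definition P (N n S x : nat) : nat := 'C(S, x) * 'C(N - S, n - x).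

Lemma keyP N n S S' x y : (S <= S')%N -> (x <= y)%N ->
  (P N n S' x * P N n S y <= P N n S' y * P N n S x)%N.
Proof.
move=> hS hxy; rewrite /P.
have h1 := @bin_tp2 S S' x y hS hxy.
have h2 : ('C(N - S', n - x) * 'C(N - S, n - y) <= 'C(N - S', n - y) * 'C(N - S, n - x))%N.
  by apply: bin_tp2; [exact: leq_sub2l | exact: leq_sub2l].
move: (leq_mul h1 h2).
set a := 'C(S, y); set b := 'C(S', x); set c := 'C(S, x); set d := 'C(S', y).
set e := 'C(N - S', n - x); set f := 'C(N - S, n - y); set g := 'C(N - S', n - y); set h := 'C(N - S, n - x).
have -> : (b * e * (a * f) = a * b * (e * f))%N by ring.
have -> : (d * g * (c * h) = c * d * (g * h))%N by ring.
by [].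
Qed.

Lemma sumP N n S : (S <= N)%N -> (\sum_(0 <= x < n.+1) P N n S x)%N = 'C(N, n).
Proof. move=> hS; rewrite big_mkord /P binomial.Vandermonde subnKC //. Qed.

Local Open Scope ring_scope.

Lemma ratle (A B C D : nat) : (0 < C)%N -> (0 < D)%N -> (A * D <= B * C)%N ->
  A%:R / C%:R <= B%:R / D%:R :> rat.
Proof.
move=> hC hD h.
rewrite ler_pdivrMr ?ltr0n // mulrAC ler_pdivlMr ?ltr0n // -!natrM ler_nat.
by [].
Qed.

Theorem theorem7 (N R n r b : nat) :
  (0 < N)%N -> (R <= N)%N -> (1 <= n)%N -> (n <= N)%N ->
  (r <= R)%N -> (b <= N - R)%N -> (r + b)%N = n ->
  (r%:R <= hyp_mean N R n -> hyp_cdf_le N R n r <= hyp_bound N R n r b) /\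
  (hyp_mean N R n <= r%:R -> hyp_cdf_ge N R n r <= hyp_bound N R n r b).
Proof.
move=> hN hRN hn hnN hrR hb hrb.
have hbe : b = (n - r)%N by lia.
have hrn : (r <= n)%N by lia.
subst b.
set Rh := minn N (((N + 1) * r) %/ n).
have hRhN : (Rh <= N)%N by rewrite geq_minl.
have hD : (0 < P N n Rh r)%N.
  rewrite /P muln_gt0 !bin_gt0; apply/andP; split; first apply: t1 => //; try lia.
  by apply: t2.
have hC : (0 < 'C(N, n))%N by rewrite bin_gt0.
have Hbound : hyp_bound N R n r (n - r) = (P N n R r)%:R / (P N n Rh r)%:R by [].
rewrite /hyp_mean ler_pdivlMr ?ler_pdivrMr ?ltr0n // -!natrM !ler_nat.
split => hmu.
- have hRh : (Rh <= R)%N by apply: t3 => //; lia.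
  rewrite Hbound /hyp_cdf_le /hyp_pmf -mulr_suml -natr_sum.
  apply: ratle => //.
  rewrite big_distrl /=.
  apply: (@leq_trans (\sum_(0 <= x < n.+1 | (x <= r)%N) P N n R r * P N n Rh x)%N).
    apply: leq_sum => x hx; exact: keyP.
  rewrite -big_distrr /= leq_mul2l; apply/orP; right.
  rewrite -(@sumP N n Rh hRhN) big_mkcond /=; apply: leq_sum => x _.
  by case: ifP.
- have hRh : (R <= Rh)%N by apply: t4 => //; lia.
  rewrite Hbound /hyp_cdf_ge /hyp_pmf -mulr_suml -natr_sum.
  apply: ratle => //.
  rewrite big_distrl /=.
  apply: (@leq_trans (\sum_(0 <= x < n.+1 | (r <= x)%N) P N n R r * P N n Rh x)%N).
    apply: leq_sum => x hx; rewrite mulnC [X in (_ <= X)%N]mulnC; exact: keyP.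
  rewrite -big_distrr /= leq_mul2l; apply/orP; right.
  rewrite -(@sumP N n Rh hRhN) big_mkcond /=; apply: leq_sum => x _.
  by case: ifP.
Qed.
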